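(* If $H$ is a finite simple connected graph of order at least $4$, then the Cartesian product $K_3 \,\square\, H$ is not well-dominated.
   Context: A graph is well-dominated if every minimal (with respect to inclusion) dominating set is a minimum dominating set. The Cartesian product $G\,\square\, H$ has vertex set $V(G)\times V(H)$, with $(g_1,h_1)$ adjacent to $(g_2,h_2)$ iff either ($g_1=g_2$ and $h_1h_2\in E(H)$) or ($h_1=h_2$ and $g_1g_2\in E(G)$). *)

(* Defs.v *)
From mathcomp Require Import all_boot.
Set Implicit Arguments. Unset Strict Implicit. Unset Printing Implicit Defensive.

Definition simple_graph (T : finType) (e : rel T) : Prop :=
  symmetric e /\ irreflexive e.

Definition connected_graph (T : finType) (e : rel T) : Prop :=
  forall x y : T, connect e x y.

Definition dominating (T : finType) (e : rel T) (D : {set T}) : bool :=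
  [forall v, (v \in D) || [exists u in D, e u v]].

Definition minimal_dominating (T : finType) (e : rel T) (D : {set T}) : Prop :=
  dominating e D /\ forall D' : {set T}, D' \proper D -> ~~ dominating e D'.

Definition minimum_dominating (T : finType) (e : rel T) (D : {set T}) : Prop :=
  dominating e D /\ forall D' : {set T}, dominating e D' -> #|D| <= #|D'|.

Definition well_dominated (T : finType) (e : rel T) : Prop :=
  forall D : {set T}, minimal_dominating e D -> minimum_dominating e D.

Definition complete_rel (n : nat) : rel 'I_n := fun i j => i != j.
Arguments complete_rel n : clear implicits.

Definition cartesian_rel (T1 T2 : finType) (e1 : rel T1) (e2 : rel T2)
  : rel (T1 * T2) :=
  fun x y => ((x.1 == y.1) && e2 x.2 y.2) || ((x.2 == y.2) && e1 x.1 y.1).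

(* Main.v *)
Require Import Defs.
From mathcomp Require Import all_boot zify.

Lemma ord3_cases (i : 'I_3) : i = ord0 \/ i = Ordinal (isT : 1 < 3) \/ i = Ordinal (isT : 2 < 3).
Proof.
case: i => [[|[|[|k]]] Hi]; [left|right;left|right;right|by []]; exact: val_inj.
Qed.

Lemma closed_all (T : finType) (e : rel T) (P : pred T) x :
  connected_graph e -> P x -> (forall u v, P u -> e u v -> P v) -> forall y, P y.
Proof.
move=> conn Px cl y; case/connectP: (conn x y) => p.
elim: p x Px => [|z p IH] x Px /=; first by move=> _ ->.
by case/andP=> exz pz ly; apply: (IH z) => //; exact: cl Px exz.
Qed.

Lemma all_in_seq (T : finType) (s : seq T) : (forall y, y \in s) -> #|T| <= size s.
Proof.
move=> H; apply: leq_trans (card_size s); apply: subset_leq_card; apply/subsetP=> y _; exact: H.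
Qed.

Definition Nb (T : finType) (e : rel T) (s : T) : {set T} := [set y | e s y].

Definition D0 (T : finType) : {set 'I_3 * T} := setX [set ord0] setT.

Lemma adjE (T : finType) (e : rel T) (u v : 'I_3 * T) :
  cartesian_rel (complete_rel 3) e u v = ((u.1 == v.1) && e u.2 v.2) || ((u.2 == v.2) && (u.1 != v.1)).
Proof. by []. Qed.

Lemma D0_dom (T : finType) (e : rel T) : dominating (cartesian_rel (complete_rel 3) e) (D0 T).
Proof.
apply/forallP=> [[i h]]; rewrite /D0 in_setX in_set1 in_setT andbT.
case: eqP => [//|ne] /=; apply/existsP; exists (ord0, h).
rewrite in_setX in_set1 in_setT eqxx /= adjE /= eqxx /=.
have -> : (ord0 != i) by rewrite eq_sym; apply/eqP.
by rewrite orbT.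
Qed.

Lemma D0_min (T : finType) (e : rel T) (D' : {set 'I_3 * T}) :
  D' \proper D0 T -> ~~ dominating (cartesian_rel (complete_rel 3) e) D'.
Proof.
case/properP=> sub [[i h] inD notin].
move: inD notin; rewrite /D0 in_setX in_set1 in_setT andbT => /eqP -> notin.
apply/negP=> /forallP /(_ (Ordinal (isT : 1 < 3), h)) /orP [].
  by move/(subsetP sub); rewrite in_setX in_set1.
case/existsP=> [[j g]] /andP [jin]; rewrite adjE /=.
have := subsetP sub _ jin; rewrite in_setX in_set1 => /andP [/eqP Ej _].
rewrite Ej; case/orP=> /andP [] //; move=> /eqP E _; move: jin; by rewrite Ej E (negbTE notin).
Qed.

Lemma D0_card (T : finType) : #|D0 T| = #|T|.
Proof. by rewrite cardsX cards1 cardsT mul1n. Qed.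

Lemma small_contra (T : finType) (e : rel T) :
  well_dominated (cartesian_rel (complete_rel 3) e) ->
  forall D, dominating (cartesian_rel (complete_rel 3) e) D -> #|T| <= #|D|.
Proof.
move=> wd D dD; rewrite -D0_card.
have [_ H] := wd _ (conj (@D0_dom T e) (fun D2 => @D0_min T e D2)); exact: H.
Qed.

Lemma big_contra (T : finType) (e : rel T) :
  well_dominated (cartesian_rel (complete_rel 3) e) ->
  forall D, minimal_dominating (cartesian_rel (complete_rel 3) e) D -> #|D| <= #|T|.
Proof.
move=> wd D mD; rewrite -D0_card; have [_ H] := wd _ mD; exact: H _ (@D0_dom T e).
Qed.

Set Implicit Arguments.

Definition o1 : 'I_3 := Ordinal (isT : 1 < 3).
Definition o2 : 'I_3 := Ordinal (isT : 2 < 3).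

Definition Dg (T : finType) (c : T) (A : {set T}) : {set 'I_3 * T} :=
  setX [set o1; o2] [set c] :|: setX [set ord0] (~: A).

Lemma Dg_card (T : finType) (c : T) (A : {set T}) : #|Dg (T:=T) c A| <= 2 + (#|T| - #|A|).
Proof.
rewrite /Dg; apply: leq_trans (leq_card_setU _ _) _.
rewrite !cardsX cards2 !cards1 (cardsCs (~: A)) setCK.
by rewrite mul1n muln1.
Qed.

Lemma Dg_dom (T : finType) (e : rel T) (c : T) (A : {set T}) :
  (forall h, h \in A -> h = c \/ (e c h /\ exists z, z \notin A /\ e z h)) ->
  dominating (cartesian_rel (complete_rel 3) e) (@Dg T c A).
Proof.
move=> HA; apply/forallP=> [[i h]].
have inD : forall j g, (j, g) \in @Dg T c A = ((j \in [set o1; o2]) && (g == c)) || ((j == ord0) && (g \notin A)).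
  by move=> j g; rewrite /Dg !inE.
rewrite inD.
case: (boolP (h \in A)) => hA.
  case: (HA h hA) => [->|[ech [z [zA ezh]]]].
    case: (ord3_cases i) => [->|[->|->]]; rewrite ?in_set2 ?eqxx ?orbT //=.
    by apply/existsP; exists (o1, c); rewrite inD in_set2 eqxx adjE /= ?eqxx.
  case: (ord3_cases i) => [->|[->|->]]; apply/orP; right; apply/existsP.
  - by exists (ord0, z); rewrite inD eqxx zA /= orbT adjE /= ?eqxx ezh.
  - by exists (o1, c); rewrite inD in_set2 eqxx /= adjE /= ?eqxx ech.
  - by exists (o2, c); rewrite inD in_set2 eqxx orbT /= adjE /= ?eqxx ech.
case: (ord3_cases i) => [->|[->|->]]; rewrite ?eqxx ?hA ?orbT //.
- by apply/orP; right; apply/existsP; exists (ord0, h); rewrite inD eqxx hA orbT adjE /= ?eqxx.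
- by apply/orP; right; apply/existsP; exists (ord0, h); rewrite inD eqxx hA orbT adjE /= ?eqxx.
Qed.


Lemma undom_aux (T : finType) (e : rel T) (S : {set T}) (D' : {set 'I_3 * T}) i x w :
  D' \subset setX setT S -> (i, x) \notin D' -> w \notin S ->
  (forall g, g \in S -> e g w -> g = x) ->
  ~~ dominating (cartesian_rel (complete_rel 3) e) D'.
Proof.
move=> sub nx wS Hg; apply/negP => /forallP /(_ (i, w)) /orP [].
  by move/(subsetP sub); rewrite in_setX (negbTE wS) andbF.
case/existsP=> [[j g]] /andP [jin]; rewrite adjE /=.
have := subsetP sub _ jin; rewrite in_setX => /andP [_ gS].
case/orP=> /andP [/eqP ji egw].
  by move: jin; rewrite ji (Hg g gS egw) (negbTE nx).
by move: gS; rewrite ji (negbTE wS).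
Qed.

Lemma D3_min (T : finType) (e : rel T) b c d f :
  b != f -> c \notin [set b; f] -> d \notin [set b; f] ->
  (forall g, g \in [set b; f] -> e g c -> g = b) ->
  (forall g, g \in [set b; f] -> e g d -> g = f) ->
  forall D' : {set 'I_3 * T}, D' \proper setX setT [set b; f] ->
  ~~ dominating (cartesian_rel (complete_rel 3) e) D'.
Proof.
move=> bf cS dS Hc Hd D' /properP [sub [[i h] hin hnot]].
move: hin; rewrite in_setX in_setT in_set2 /=; case/orP => /eqP E; move: hnot; rewrite E => hnot.
  exact: undom_aux sub hnot cS Hc.
exact: undom_aux sub hnot dS Hd.
Qed.

Lemma D3_dom (T : finType) (e : rel T) b c d f :
  (forall y, y \in [:: b; c; d; f]) -> e b c -> e f d ->
  dominating (cartesian_rel (complete_rel 3) e) (setX setT [set b; f]).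
Proof.
move=> all ebc efd; apply/forallP => [[i h]].
rewrite in_setX in_setT in_set2 /=.
move: (all h); rewrite !inE => /or4P [] /eqP ->; rewrite ?eqxx ?orbT //=.
  apply/orP; right; apply/existsP; exists (i, b).
  by rewrite in_setX in_setT in_set2 eqxx /= adjE /= eqxx ebc.
apply/orP; right; apply/existsP; exists (i, f).
by rewrite in_setX in_setT in_set2 eqxx orbT /= adjE /= eqxx efd.
Qed.


Lemma closed_seq (T : finType) (e : rel T) (s : seq T) x :
  connected_graph e -> x \in s -> (forall u v, u \in s -> e u v -> v \in s) -> #|T| <= size s.
Proof.
move=> conn xs cl; apply: all_in_seq => y.
exact: (@closed_all T e (fun y => y \in s) x conn xs cl y).
Qed.

Theorem proposition23 (T : finType) (e : rel T) :
  simple_graph e -> connected_graph e -> 3 < #|T| ->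
  ~ well_dominated (cartesian_rel (complete_rel 3) e).
Proof.
move=> [esym eirr] conn n4 wd.
have small := @small_contra T e wd.
have irr x : e x x = false by exact: eirr.
have NbE s y : (y \in @Nb T e s) = e s y by rewrite inE.
have deg2 : forall s x y z, e s x -> e s y -> e s z -> x != y -> y != z -> z != x -> False.
  move=> s x y z esx esy esz xy yz zx.
  have k2 : 2 < #|@Nb T e s| by apply/card_gt2P; exists x, y, z; rewrite !NbE.
  have hc : forall h, h \in @Nb T e s -> h = s \/ (e s h /\ exists z, z \notin @Nb T e s /\ e z h).
    move=> h; rewrite NbE => esh; right; split => //; exists s; split => //.
    by rewrite NbE irr.
  have h1 := small _ (@Dg_dom T e s (@Nb T e s) hc).
  have h2 := Dg_card s (@Nb T e s).
  have h3 : #|@Nb T e s| <= #|T| := max_card _.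
  move: h1 h2 h3 k2; set n := #|T|; set k := #|Nb T e s|; set m := #|Dg _ _|; lia.
have res : forall c x y, e c x -> e c y -> x != y ->
    exists2 w, e c w & forall z, e w z -> (z == c) || e c z.
  move=> c x y ecx ecy xy.
  case: (boolP [exists w, e c w && [forall z, e w z ==> (z == c) || e c z]]).
    case/existsP => w /andP [ecw /forallP H]; exists w => // z ewz.
    exact: (implyP (H z)).
  move=> Hn; exfalso.
  have hc : forall h, h \in c |: @Nb T e c -> h = c \/ (e c h /\ exists z, z \notin c |: @Nb T e c /\ e z h).
    move=> h; rewrite in_setU1 NbE; case/orP => [/eqP -> | ech]; first by left.
    right; split => //.
    move: Hn; rewrite negb_exists => /forallP /(_ h); rewrite ech /= negb_forall.
    case/existsP => z; rewrite negb_imply => /andP [ehz nz].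
    exists z; split; last by rewrite esym.
    by rewrite in_setU1 NbE.
  have h1 := small _ (@Dg_dom T e c _ hc).
  have h2 := Dg_card c (c |: @Nb T e c).
  have h3 : 1 < #|@Nb T e c| by apply/card_gt1P; exists x, y; rewrite !NbE.
  have h4 : #|c |: @Nb T e c| = (c \notin @Nb T e c) + #|@Nb T e c| by rewrite cardsU1.
  have h5 : #|c |: @Nb T e c| <= #|T| := max_card _.
  rewrite NbE irr /= in h4.
  move: h1 h2 h3 h4 h5; set n := #|T|; set k := #|Nb T e c|; set k' := #|c |: _|; set m := #|Dg _ _|; lia.
have cl : forall (s : seq T) x, x \in s -> (forall u v, u \in s -> e u v -> v \in s) -> size s < 4 -> False.
  move=> s x xs H sz; have := @closed_seq T e s x conn xs H; move: n4 sz; set n := #|T|; lia.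
have nbr : forall c b d z, e c b -> e c d -> b != d -> e c z -> z = b \/ z = d.
  move=> c b d z ecb ecd bd ecz.
  case: (eqVneq z b) => [->|zb]; first by left.
  case: (eqVneq z d) => [->|zd]; first by right.
  exfalso; apply: (deg2 c b d z ecb ecd ecz bd _ zb); by rewrite eq_sym.
have neq_of : forall x y, e x y -> x != y.
  by move=> x y exy; apply/eqP => E; move: exy; rewrite E irr.
have P4 : forall c b d, e c b -> e c d -> b != d ->
    (forall z, e b z -> (z == c) || e c z) -> False.
  move=> c b d ecb ecd bd Hb.
  have cb := neq_of _ _ ecb; have cd := neq_of _ _ ecd.
  case: (boolP (e b d)) => ebd.
    apply: (cl [:: b; c; d] b); rewrite ?inE ?eqxx // => u v.
    rewrite !inE => /or3P [] /eqP -> euv.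
    - by case/orP: (Hb v euv) => [->|/(nbr _ _ _ _ ecb ecd bd) [] ->]; rewrite ?eqxx ?orbT.
    - by case: (nbr _ _ _ _ ecb ecd bd euv) => ->; rewrite ?eqxx ?orbT.
    - have edb : e d b by rewrite esym.
      have edc : e d c by rewrite esym.
      have bc : b != c by rewrite eq_sym.
      by case: (nbr _ _ _ _ edb edc bc euv) => ->; rewrite ?eqxx ?orbT.
  have nb : forall z, e b z -> z = c.
    move=> z ebz; case/orP: (Hb z ebz) => [/eqP //|/(nbr _ _ _ _ ecb ecd bd) [] E].
      by move: ebz; rewrite E irr.
    by move: ebz; rewrite E (negbTE ebd).
  case: (boolP [exists f, e d f && (f != c)]); last first.
    rewrite negb_exists => /forallP Hd.
    apply: (cl [:: b; c; d] b); rewrite ?inE ?eqxx // => u v.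
    rewrite !inE => /or3P [] /eqP -> euv.
    - by rewrite (nb v euv) eqxx orbT.
    - by case: (nbr _ _ _ _ ecb ecd bd euv) => ->; rewrite ?eqxx ?orbT.
    - by move: (Hd v); rewrite euv /= negbK => ->; rewrite orbT.
  case/existsP => f /andP [edf fc].
  have edc : e d c by rewrite esym.
  have df := neq_of _ _ edf.
  have fb : f != b.
    by apply/eqP => E; move: edf; rewrite E esym (negbTE ebd).
  have nd : forall z, e d z -> z = c \/ z = f.
    move=> z; apply: nbr => //; by rewrite eq_sym.
  have cf : c != f by rewrite eq_sym.
  have efc : e f c = false.
    apply/negP => efc; rewrite esym in efc.
    by case: (nbr _ _ _ _ ecb ecd bd efc) => E; [move: fb | move: df]; rewrite E eqxx ?eq_sym.
  have [w edw Hw] := res d c f edc edf cf.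
  have nf : forall z, e f z -> z = d.
    case: (nd w edw) => E; move: Hw; rewrite E => Hw.
      by case/orP: (Hw b ecb) => H; [move: H; rewrite (negbTE bd) | move: H; rewrite esym (negbTE ebd)].
    move=> z efz; case/orP: (Hw z efz) => [/eqP //|/nd [] E'].
      by move: efz; rewrite E' efc.
    by move: efz; rewrite E' irr.
  have allT : forall y, y \in [:: b; c; d; f].
    apply: (@closed_all T e (fun y => y \in [:: b; c; d; f]) b conn); first by rewrite inE eqxx.
    move=> u v; rewrite !inE => /or4P [] /eqP -> euv.
    - by rewrite (nb v euv) eqxx !orbT.
    - by case: (nbr _ _ _ _ ecb ecd bd euv) => ->; rewrite ?eqxx ?orbT.
    - by case: (nd v euv) => ->; rewrite ?eqxx ?orbT.
    - by rewrite (nf v euv) eqxx !orbT.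
  have bf : b != f by rewrite eq_sym.
  have mD : minimal_dominating (cartesian_rel (complete_rel 3) e) (setX setT [set b; f]).
    split.
      by apply: D3_dom allT _ _; rewrite esym.
    apply: (@D3_min T e b c d f) => //.
    - by rewrite in_set2 negb_or cb cf.
    - by rewrite in_set2 negb_or (eq_sym d b) bd df.
    - move=> g; rewrite in_set2 => /orP [] /eqP -> //; by rewrite efc.
    - move=> g; rewrite in_set2 => /orP [] /eqP -> //; by rewrite (negbTE ebd).
  have h1 := @big_contra T e wd _ mD.
  have h2 : #|T| <= 4 := @all_in_seq T _ allT.
  rewrite cardsX cardsT card_ord cards2 bf /= in h1.
  by have := leq_trans h1 h2.
have [c [b [d [ecb [ecd bd]]]]] : exists c b d, [/\ e c b, e c d & b != d].
  have : 0 < #|T| by apply: leq_trans n4.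
  case/card_gt0P => x _.
  case: (boolP [exists w, e x w]); last first.
    rewrite negb_exists => /forallP Hx; exfalso.
    apply: (cl [:: x] x); rewrite ?inE ?eqxx // => u v; rewrite !inE => /eqP -> exv.
    by move: (Hx v); rewrite exv.
  case/existsP => w exw.
  case: (boolP [exists v, e x v && (v != w)]).
    by case/existsP => v /andP [exv vw]; exists x, w, v; split => //; rewrite eq_sym.
  rewrite negb_exists => /forallP Hx.
  case: (boolP [exists v, e w v && (v != x)]).
    case/existsP => v /andP [ewv vx]; exists w, x, v; split => //; first by rewrite esym.
    by rewrite eq_sym.
  rewrite negb_exists => /forallP Hw; exfalso.
  apply: (cl [:: x; w] x); rewrite ?inE ?eqxx // => u v; rewrite !inE => /orP [] /eqP -> euv.
    by move: (Hx v); rewrite euv /= negbK => ->; rewrite orbT.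
  by move: (Hw v); rewrite euv /= negbK => ->.
have [w ecw Hw] := res c b d ecb ecd bd.
case: (nbr c b d w ecb ecd bd ecw) => E; move: Hw; rewrite E => Hw.
  exact: (P4 c b d ecb ecd bd Hw).
apply: (P4 c d b ecd ecb _ Hw); by rewrite eq_sym.
Qed.
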